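(* Let $\mathbb{B}$ be a category with finite limits, in which every morphism is regarded as small, and let $\mathbf{C}=(C_0,C_1,d_0,d_1,c,i)$ be an internal category in $\mathbb{B}$. Then the externalization $\mathbf{proj}:\mathrm{Fam}(\mathbf{C})\to\mathbb{B}$ is a concrete fibration over $\mathbb{B}$.
   Context: An internal category consists of objects $C_0,C_1$, domain/codomain $d_0,d_1:C_1\to C_0$, composition $c:C_1\times_{C_0}C_1\to C_1$, identity $i:C_0\to C_1$ satisfying the usual axioms. $\mathrm{Fam}(\mathbf{C})$ has objects $(I,X)$ with $X:I\to C_0$, morphisms $(u,f):(I,X)\to(J,Y)$ with $u:I\to J$, $f:I\to C_1$, $d_0f=X$, $d_1f=Yu$, composition $(v,g)\circ(u,f)=(vu,c\circ\langle gu,f\rangle)$, identities $(\mathrm{id}_I,iX)$; $\mathbf{proj}(I,X)=I$ is a fibration (the externalization). A concrete fibration over $\mathbb{B}$ is a fibration $P:\mathbb{X}\to\mathbb{B}$ together with a faithful fibered functor $U$ over $\mathbb{B}$ from $P$ to the codomain fibration $\mathbf{cod}:\mathbb{B}^{\to}\to\mathbb{B}$ (so $U$ commutes with the projections to $\mathbb{B}$ and preserves cartesian morphisms), such that for every object $X$, $UX$ is a small morphism $|X|\to PX$, and $U$ sends each $f:X\to Y$ to a commuting square with top $|f|:|X|\to|Y|$ and bottom $Pf$. *)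

(* Defs.v *)
Set Implicit Arguments.
Unset Strict Implicit.

Record PreCat : Type := {
  ob :> Type;
  hom : ob -> ob -> Type;
  comp : forall a b c : ob, hom b c -> hom a b -> hom a c;
  idm : forall a : ob, hom a a }.

Notation "g ∘ f" := (comp g f) (at level 40, left associativity).

Record is_cat (C : PreCat) : Prop := {
  cat_assoc : forall (a b c d : C) (f : hom a b) (g : hom b c) (h : hom c d),
      h ∘ (g ∘ f) = (h ∘ g) ∘ f;
  cat_idl : forall (a b : C) (f : hom a b), idm b ∘ f = f;
  cat_idr : forall (a b : C) (f : hom a b), f ∘ idm a = f }.

Record Pullback (C : PreCat) (x y z : C) (f : hom x z) (g : hom y z) := {
  pb_ob :> C;
  pb1 : hom pb_ob x;
  pb2 : hom pb_ob y;
  pb_comm : f ∘ pb1 = g ∘ pb2;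
  pb_pair : forall (w : C) (a : hom w x) (b : hom w y), f ∘ a = g ∘ b -> hom w pb_ob;
  pb_pair1 : forall (w : C) (a : hom w x) (b : hom w y) (e : f ∘ a = g ∘ b),
      pb1 ∘ pb_pair e = a;
  pb_pair2 : forall (w : C) (a : hom w x) (b : hom w y) (e : f ∘ a = g ∘ b),
      pb2 ∘ pb_pair e = b;
  pb_uniq : forall (w : C) (h h' : hom w pb_ob),
      pb1 ∘ h = pb1 ∘ h' -> pb2 ∘ h = pb2 ∘ h' -> h = h' }.

Definition is_terminal (C : PreCat) (t : C) : Prop :=
  forall a : C, exists h : hom a t, forall h' : hom a t, h' = h.

Definition has_finite_limits (C : PreCat) : Prop :=
  (exists t : C, is_terminal t) /\
  (forall (x y z : C) (f : hom x z) (g : hom y z), inhabited (Pullback f g)).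

(** * Internal categories.
   d0 = domain, d1 = codomain.  C2 = C1 x_{C0} C1 is the pullback of d0 and d1:
   a generalized element k of C2 is a pair (g, f) = (pb1 k, pb2 k) with
   d0 g = d1 f, and icomp k is "g after f".  The unit and associativity laws
   are stated on generalized elements (equivalent to the usual diagrams). *)
Record InternalCat (B : PreCat) := {
  C0 : B;
  C1 : B;
  d0 : hom C1 C0;
  d1 : hom C1 C0;
  C2 : Pullback d0 d1;
  icomp : hom C2 C1;
  iid : hom C0 C1;
  icomp_d0 : d0 ∘ icomp = d0 ∘ pb2 C2;
  icomp_d1 : d1 ∘ icomp = d1 ∘ pb1 C2;
  iid_d0 : d0 ∘ iid = idm C0;
  iid_d1 : d1 ∘ iid = idm C0;
  icomp_unit_l : forall (w : B) (k : hom w C2),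
      pb1 C2 ∘ k = iid ∘ (d1 ∘ (pb2 C2 ∘ k)) -> icomp ∘ k = pb2 C2 ∘ k;
  icomp_unit_r : forall (w : B) (k : hom w C2),
      pb2 C2 ∘ k = iid ∘ (d0 ∘ (pb1 C2 ∘ k)) -> icomp ∘ k = pb1 C2 ∘ k;
  icomp_assoc : forall (w : B) (k1 k2 k3 k4 : hom w C2),
      (* k1 = (h,g), k3 = (g,f), k2 = (h.g, f), k4 = (h, g.f) *)
      pb2 C2 ∘ k1 = pb1 C2 ∘ k3 ->
      pb1 C2 ∘ k2 = icomp ∘ k1 -> pb2 C2 ∘ k2 = pb2 C2 ∘ k3 ->
      pb1 C2 ∘ k4 = pb1 C2 ∘ k1 -> pb2 C2 ∘ k4 = icomp ∘ k3 ->
      icomp ∘ k2 = icomp ∘ k4 }.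

Record PreFunctor (X Y : PreCat) := {
  fo :> X -> Y;
  fm : forall a b : X, hom a b -> hom (fo a) (fo b) }.

Record is_functor (X Y : PreCat) (F : PreFunctor X Y) : Prop := {
  fun_comp : forall (a b c : X) (g : hom b c) (f : hom a b),
      fm F (g ∘ f) = fm F g ∘ fm F f;
  fun_id : forall a : X, fm F (idm a) = idm (F a) }.

Definition faithful (X Y : PreCat) (F : PreFunctor X Y) : Prop :=
  forall (a b : X) (f g : hom a b), fm F f = fm F g -> f = g.

Definition cartesian (X B : PreCat) (P : PreFunctor X B) (x y : X) (f : hom x y)
  : Prop :=
  forall (z : X) (g : hom z y) (w : hom (P z) (P x)),
    fm P g = fm P f ∘ w ->
    exists h : hom z x, (f ∘ h = g /\ fm P h = w) /\
      (forall h' : hom z x, f ∘ h' = g -> fm P h' = w -> h' = h).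

Definition eq_hom (C : PreCat) (a b : C) (e : a = b) : hom a b :=
  match e in _ = b' return hom a b' with eq_refl => idm a end.

Definition is_fibration (X B : PreCat) (P : PreFunctor X B) : Prop :=
  is_functor P /\
  forall (y : X) (I : B) (u : hom I (P y)),
    exists (x : X) (f : hom x y) (e : P x = I),
      cartesian P f /\ fm P f = u ∘ eq_hom e.

Section Arrow.
Variables (B : PreCat) (HB : is_cat B).

Record ArrOb := { adom : B; acod : B; aarr : hom adom acod }.
Record ArrHom (a b : ArrOb) := {
  atop : hom (adom a) (adom b);
  abot : hom (acod a) (acod b);
  asq : aarr b ∘ atop = abot ∘ aarr a }.

Lemma arr_comp_sq (a b c : ArrOb) (g : ArrHom b c) (f : ArrHom a b) :
  aarr c ∘ (atop g ∘ atop f) = (abot g ∘ abot f) ∘ aarr a.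
Proof.
  rewrite (cat_assoc HB), (asq g), <- (cat_assoc HB), (asq f), (cat_assoc HB).
  reflexivity.
Qed.

Lemma arr_id_sq (a : ArrOb) : aarr a ∘ idm (adom a) = idm (acod a) ∘ aarr a.
Proof. rewrite (cat_idl HB), (cat_idr HB). reflexivity. Qed.

Definition ArrCat : PreCat :=
  {| ob := ArrOb; hom := ArrHom;
     comp := fun a b c g f => Build_ArrHom (arr_comp_sq g f);
     idm := fun a => Build_ArrHom (arr_id_sq a) |}.

Definition codF : PreFunctor ArrCat B :=
  {| fo := fun a : ArrCat => acod a; fm := fun a b (f : hom a b) => abot f |}.
End Arrow.

(** * Concrete fibrations (every morphism of B is small).
   A fibered functor U from P to cod commuting strictly with the projections
   is exactly: for each x an arrow |x| -> P x, and for each f a top arrow |f|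
   making the square with bottom P f commute. *)
Record ConcreteData (B : PreCat) (X : PreCat) (P : PreFunctor X B) := {
  carrier : X -> B;
  uarr : forall x : X, hom (carrier x) (P x);
  utop : forall x y : X, hom x y -> hom (carrier x) (carrier y);
  usq : forall (x y : X) (f : hom x y), uarr y ∘ utop f = fm P f ∘ uarr x }.

Definition Ufun (B : PreCat) (HB : is_cat B) (X : PreCat) (P : PreFunctor X B)
  (U : ConcreteData P) : PreFunctor X (ArrCat HB) :=
  {| fo := fun x => Build_ArrOb (uarr U x) : ArrCat HB;
     fm := fun x y (f : hom x y) =>
       @Build_ArrHom B (Build_ArrOb (uarr U x)) (Build_ArrOb (uarr U y))
         (utop U f) (fm P f) (usq U f) : @hom (ArrCat HB) _ _ |}.

Definition is_concrete_fibration (B : PreCat) (HB : is_cat B) (X : PreCat)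
  (P : PreFunctor X B) : Prop :=
  is_fibration P /\
  exists U : ConcreteData P,
    is_functor (Ufun HB U) /\ faithful (Ufun HB U) /\
    (forall (x y : X) (f : hom x y),
        cartesian P f -> cartesian (codF HB) (fm (Ufun HB U) f)).

Section Fam.
Variables (B : PreCat) (HB : is_cat B) (C : InternalCat B).

Record FamOb := { fI : B; fX : hom fI (C0 C) }.
Record FamHom (A A' : FamOb) := {
  fu : hom (fI A) (fI A');
  ff : hom (fI A) (C1 C);
  fdom : d0 C ∘ ff = fX A;
  fcod : d1 C ∘ ff = fX A' ∘ fu }.

Lemma fam_pair_ok (A1 A2 A3 : FamOb) (g : FamHom A2 A3) (f : FamHom A1 A2) :
  d0 C ∘ (ff g ∘ fu f) = d1 C ∘ ff f.
Proof. rewrite (cat_assoc HB), (fdom g), (fcod f). reflexivity. Qed.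

Definition fam_cf (A1 A2 A3 : FamOb) (g : FamHom A2 A3) (f : FamHom A1 A2)
  : hom (fI A1) (C1 C) :=
  icomp C ∘ pb_pair (C2 C) (fam_pair_ok g f).

Lemma fam_comp_dom (A1 A2 A3 : FamOb) (g : FamHom A2 A3) (f : FamHom A1 A2) :
  d0 C ∘ fam_cf g f = fX A1.
Proof.
  unfold fam_cf.
  rewrite (cat_assoc HB), (icomp_d0 C), <- (cat_assoc HB), pb_pair2, (fdom f).
  reflexivity.
Qed.

Lemma fam_comp_cod (A1 A2 A3 : FamOb) (g : FamHom A2 A3) (f : FamHom A1 A2) :
  d1 C ∘ fam_cf g f = fX A3 ∘ (fu g ∘ fu f).
Proof.
  unfold fam_cf.
  rewrite (cat_assoc HB), (icomp_d1 C), <- (cat_assoc HB), pb_pair1,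
    (cat_assoc HB), (fcod g), <- (cat_assoc HB).
  reflexivity.
Qed.

Lemma fam_id_dom (A : FamOb) : d0 C ∘ (iid C ∘ fX A) = fX A.
Proof. rewrite (cat_assoc HB), (iid_d0 C), (cat_idl HB). reflexivity. Qed.

Lemma fam_id_cod (A : FamOb) : d1 C ∘ (iid C ∘ fX A) = fX A ∘ idm (fI A).
Proof.
  rewrite (cat_assoc HB), (iid_d1 C), (cat_idl HB), (cat_idr HB). reflexivity.
Qed.

Definition Fam : PreCat :=
  {| ob := FamOb; hom := FamHom;
     comp := fun a b c g f => Build_FamHom (fam_comp_dom g f) (fam_comp_cod g f);
     idm := fun a => Build_FamHom (fam_id_dom a) (fam_id_cod a) |}.

Definition proj : PreFunctor Fam B :=
  {| fo := fun A : Fam => fI A; fm := fun a b (f : hom a b) => fu f |}.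
End Fam.

(* Main.v *)
Require Import Defs.
From Stdlib Require Import ProofIrrelevance ClassicalEpsilon.
Set Implicit Arguments.

Lemma pair_uniq (B : PreCat) (x y z : B) (f : hom x z) (g : hom y z)
  (P : Pullback f g) (w : B) (a : hom w x) (b : hom w y) (e : f ∘ a = g ∘ b)
  (k : hom w P) : pb1 P ∘ k = a -> pb2 P ∘ k = b -> k = pb_pair P e.
Proof.
  intros H1 H2. apply pb_uniq; rewrite ?pb_pair1, ?pb_pair2; assumption.
Qed.

Lemma FamHom_eq (B : PreCat) (C : InternalCat B) (A A' : FamOb C)
  (f g : FamHom A A') : fu f = fu g -> ff f = ff g -> f = g.
Proof.
  destruct f as [u1 f1 p1 q1], g as [u2 f2 p2 q2]; simpl; intros -> ->.
  rewrite (proof_irrelevance _ p1 p2), (proof_irrelevance _ q1 q2). reflexivity.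
Qed.

Lemma ArrHom_eq (B : PreCat) (a b : ArrOb B) (f g : ArrHom a b) :
  atop f = atop g -> abot f = abot g -> f = g.
Proof.
  destruct f as [u1 f1 p1], g as [u2 f2 p2]; simpl; intros -> ->.
  rewrite (proof_irrelevance _ p1 p2). reflexivity.
Qed.

Lemma lift_dom (B : PreCat) (HB : is_cat B) (C : InternalCat B) (I J : B)
  (Y : hom J (C0 C)) (u : hom I J) : d0 C ∘ (iid C ∘ (Y ∘ u)) = Y ∘ u.
Proof. rewrite (cat_assoc HB), (iid_d0 C), (cat_idl HB). reflexivity. Qed.

Lemma lift_cod (B : PreCat) (HB : is_cat B) (C : InternalCat B) (I J : B)
  (Y : hom J (C0 C)) (u : hom I J) : d1 C ∘ (iid C ∘ (Y ∘ u)) = Y ∘ u.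
Proof. rewrite (cat_assoc HB), (iid_d1 C), (cat_idl HB). reflexivity. Qed.

Lemma proj_functor (B : PreCat) (HB : is_cat B) (C : InternalCat B) :
  is_functor (proj HB C).
Proof. split; reflexivity. Qed.

Lemma unit_l_comp (B : PreCat) (HB : is_cat B) (C : InternalCat B)
  (A1 A2 A3 : FamOb C) (g : FamHom A2 A3) (f : FamHom A1 A2) :
  ff g = iid C ∘ fX A2 -> fam_cf HB g f = ff f.
Proof.
  intro Hg. unfold fam_cf. rewrite icomp_unit_l, pb_pair2; [reflexivity|].
  rewrite pb_pair1, pb_pair2, Hg, (fcod f), (cat_assoc HB). reflexivity.
Qed.

Lemma proj_fibration (B : PreCat) (HB : is_cat B) (C : InternalCat B) :
  is_fibration (proj HB C).
Proof.
  split; [apply proj_functor|].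
  intros y I u.
  set (x := {| fI := I; fX := fX y ∘ u |} : Fam HB C).
  set (f := @Build_FamHom B C x y u _ (lift_dom HB C _ _ (fX y) u)
                          (lift_cod HB C _ _ (fX y) u) : @hom (Fam HB C) x y).
  exists x, f, eq_refl. split.
  2: { simpl. rewrite (cat_idr HB). reflexivity. }
  intros z g w Hw. simpl in Hw.
  assert (Hc : d1 C ∘ ff g = fX x ∘ w).
  { rewrite (fcod g). simpl. rewrite Hw, (cat_assoc HB). reflexivity. }
  exists (@Build_FamHom B C z x w (ff g) (fdom g) Hc : @hom (Fam HB C) z x).
  split; [split|].
  - apply FamHom_eq; simpl; [symmetry; exact Hw|].
    apply (unit_l_comp HB (A2 := x) (A3 := y) f). reflexivity.
  - reflexivity.
  - intros h' Hh' Hw'. apply FamHom_eq; [exact Hw'|]. simpl.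
    rewrite <- Hh'. simpl. symmetry.
    apply (unit_l_comp HB (A2 := x) (A3 := y) f). reflexivity.
Qed.

Definition PBT (B : PreCat) (C : InternalCat B) :=
  forall (I : B) (X : hom I (C0 C)), Pullback X (d1 C).

Lemma ut_e2 (B : PreCat) (HB : is_cat B) (C : InternalCat B) (PB : PBT C)
  (x y : FamOb C) (f : FamHom x y) :
  d0 C ∘ (ff f ∘ pb1 (PB _ (fX x))) = d1 C ∘ pb2 (PB _ (fX x)).
Proof. rewrite (cat_assoc HB), (fdom f), pb_comm. reflexivity. Qed.

Definition ut_k (B : PreCat) (HB : is_cat B) (C : InternalCat B) (PB : PBT C)
  (x y : FamOb C) (f : FamHom x y) : hom (PB _ (fX x)) (C2 C) :=
  pb_pair (C2 C) (ut_e2 HB PB f).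

Lemma ut_e (B : PreCat) (HB : is_cat B) (C : InternalCat B) (PB : PBT C)
  (x y : FamOb C) (f : FamHom x y) :
  fX y ∘ (fu f ∘ pb1 (PB _ (fX x))) = d1 C ∘ (icomp C ∘ ut_k HB PB f).
Proof.
  unfold ut_k. symmetry. rewrite (cat_assoc HB), (icomp_d1 C), <- (cat_assoc HB), pb_pair1,
    (cat_assoc HB), (fcod f), (cat_assoc HB). reflexivity.
Qed.

Definition ut (B : PreCat) (HB : is_cat B) (C : InternalCat B) (PB : PBT C)
  (x y : FamOb C) (f : FamHom x y) : hom (PB _ (fX x)) (PB _ (fX y)) :=
  pb_pair (PB _ (fX y)) (ut_e HB PB f).

Lemma ut_sq (B : PreCat) (HB : is_cat B) (C : InternalCat B) (PB : PBT C)
  (x y : FamOb C) (f : FamHom x y) :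
  pb1 (PB _ (fX y)) ∘ ut HB PB f = fu f ∘ pb1 (PB _ (fX x)).
Proof. unfold ut. apply pb_pair1. Qed.

Lemma ut_2 (B : PreCat) (HB : is_cat B) (C : InternalCat B) (PB : PBT C)
  (x y : FamOb C) (f : FamHom x y) :
  pb2 (PB _ (fX y)) ∘ ut HB PB f = icomp C ∘ ut_k HB PB f.
Proof. unfold ut. apply pb_pair2. Qed.

Lemma ut_k1 (B : PreCat) (HB : is_cat B) (C : InternalCat B) (PB : PBT C)
  (x y : FamOb C) (f : FamHom x y) :
  pb1 (C2 C) ∘ ut_k HB PB f = ff f ∘ pb1 (PB _ (fX x)).
Proof. unfold ut_k. apply pb_pair1. Qed.

Lemma ut_k2 (B : PreCat) (HB : is_cat B) (C : InternalCat B) (PB : PBT C)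
  (x y : FamOb C) (f : FamHom x y) :
  pb2 (C2 C) ∘ ut_k HB PB f = pb2 (PB _ (fX x)).
Proof. unfold ut_k. apply pb_pair2. Qed.

Definition UD (B : PreCat) (HB : is_cat B) (C : InternalCat B) (PB : PBT C)
  : ConcreteData (proj HB C) :=
  @Build_ConcreteData B (Fam HB C) (proj HB C)
     (fun x => pb_ob (PB _ (fX x))) (fun x => pb1 (PB _ (fX x)))
     (fun x y f => ut HB PB f) (fun x y f => ut_sq HB PB f).

Lemma ut_comp (B : PreCat) (HB : is_cat B) (C : InternalCat B) (PB : PBT C)
  (x y z : FamOb C) (g : FamHom y z) (f : FamHom x y) :
  ut HB PB (comp (p := Fam HB C) g f) = ut HB PB g ∘ ut HB PB f.
Proof.
  symmetry. unfold ut at 1. apply pair_uniq.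
  - rewrite (cat_assoc HB), pb_pair1, <- (cat_assoc HB), ut_sq, (cat_assoc HB).
    reflexivity.
  - rewrite (cat_assoc HB), pb_pair2, <- (cat_assoc HB).
    symmetry.
    apply (icomp_assoc (k1 := pb_pair (C2 C) (fam_pair_ok HB g f) ∘ pb1 (PB _ (fX x))) (k3 := ut_k HB PB f)).
    + rewrite (cat_assoc HB), pb_pair2, ut_k1. reflexivity.
    + rewrite ut_k1. simpl. unfold fam_cf. rewrite (cat_assoc HB). reflexivity.
    + rewrite !ut_k2. reflexivity.
    + rewrite (cat_assoc HB), ut_k1, <- (cat_assoc HB), ut_sq.
      symmetry. rewrite (cat_assoc HB), pb_pair1, (cat_assoc HB).
      reflexivity.
    + rewrite (cat_assoc HB), ut_k2, ut_2. reflexivity.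
Qed.

Lemma ut_id (B : PreCat) (HB : is_cat B) (C : InternalCat B) (PB : PBT C)
  (x : FamOb C) : ut HB PB (idm (p := Fam HB C) x) = idm _.
Proof.
  symmetry. unfold ut. apply pair_uniq.
  - rewrite (cat_idr HB). simpl. rewrite (cat_idl HB). reflexivity.
  - rewrite (cat_idr HB). symmetry. rewrite icomp_unit_l, ut_k2; [reflexivity|].
    rewrite ut_k1, ut_k2. simpl. rewrite <- (cat_assoc HB), pb_comm. reflexivity.
Qed.

Lemma utkT (B : PreCat) (HB : is_cat B) (C : InternalCat B) (PB : PBT C)
  (x y : FamOb C) (f : FamHom x y) (W : B) (T : hom W (PB _ (fX x)))
  (a' b' : hom W (C1 C)) (e : d0 C ∘ a' = d1 C ∘ b') :
  ff f ∘ (pb1 (PB _ (fX x)) ∘ T) = a' -> pb2 (PB _ (fX x)) ∘ T = b' ->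
  ut_k HB PB f ∘ T = pb_pair (C2 C) e.
Proof.
  intros H1 H2. apply pair_uniq.
  - rewrite (cat_assoc HB), ut_k1, <- (cat_assoc HB). exact H1.
  - rewrite (cat_assoc HB), ut_k2. exact H2.
Qed.

Lemma sec_e (B : PreCat) (HB : is_cat B) (C : InternalCat B) (x : FamOb C) :
  fX x ∘ idm (fI x) = d1 C ∘ (iid C ∘ fX x).
Proof. rewrite (cat_idr HB), (cat_assoc HB), (iid_d1 C), (cat_idl HB). reflexivity. Qed.

Lemma ut_sec (B : PreCat) (HB : is_cat B) (C : InternalCat B) (PB : PBT C)
  (x y : FamOb C) (f : FamHom x y) :
  pb2 (PB _ (fX y)) ∘ (ut HB PB f ∘ pb_pair (PB _ (fX x)) (sec_e HB x)) = ff f.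
Proof.
  assert (H1 : pb1 (C2 C) ∘ (ut_k HB PB f ∘ pb_pair (PB _ (fX x)) (sec_e HB x)) = ff f).
  { rewrite (cat_assoc HB), ut_k1, <- (cat_assoc HB), pb_pair1, (cat_idr HB).
    reflexivity. }
  assert (H2 : pb2 (C2 C) ∘ (ut_k HB PB f ∘ pb_pair (PB _ (fX x)) (sec_e HB x))
               = iid C ∘ fX x).
  { rewrite (cat_assoc HB), ut_k2, pb_pair2. reflexivity. }
  rewrite (cat_assoc HB), ut_2, <- (cat_assoc HB), icomp_unit_r.
  - exact H1.
  - rewrite H1, H2, (fdom f). reflexivity.
Qed.

Lemma UD_functor (B : PreCat) (HB : is_cat B) (C : InternalCat B) (PB : PBT C) :
  is_functor (Ufun HB (UD HB PB)).
Proof.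
  split.
  - intros a b c g f. apply ArrHom_eq; simpl; [apply ut_comp | reflexivity].
  - intros a. apply ArrHom_eq; simpl; [apply ut_id | reflexivity].
Qed.

Lemma UD_faithful (B : PreCat) (HB : is_cat B) (C : InternalCat B) (PB : PBT C) :
  faithful (Ufun HB (UD HB PB)).
Proof.
  intros a b f g H.
  pose proof (f_equal (@atop _ _ _) H) as Ht. simpl in Ht.
  pose proof (f_equal (@abot _ _ _) H) as Hb. simpl in Hb.
  apply FamHom_eq; [exact Hb|].
  rewrite <- (ut_sec HB PB f), <- (ut_sec HB PB g), Ht. reflexivity.
Qed.

Lemma UD_cart (B : PreCat) (HB : is_cat B) (C : InternalCat B) (PB : PBT C)
  (x y : Fam HB C) (f : hom x y) :
  cartesian (proj HB C) f -> cartesian (codF HB) (fm (Ufun HB (UD HB PB)) f).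
Proof.
  intros Hf z g w Hw. simpl in Hw.
  destruct z as [A P a]. destruct g as [t b sq]. simpl in *.
  set (beta := pb2 (PB _ (fX y)) ∘ t).
  set (z' := {| fI := A; fX := d0 C ∘ beta |} : Fam HB C).
  assert (Hc : d1 C ∘ beta = fX y ∘ (b ∘ a)).
  { unfold beta. rewrite (cat_assoc HB), <- pb_comm, <- (cat_assoc HB), sq.
    reflexivity. }
  set (g' := @Build_FamHom B C z' y (b ∘ a) beta eq_refl Hc : @hom (Fam HB C) z' y).
  destruct (Hf z' g' (w ∘ a)) as [h [[Hfh Huh] Hun]].
  { simpl. rewrite Hw, (cat_assoc HB). reflexivity. }
  simpl in Huh.
  assert (et : fX x ∘ (w ∘ a) = d1 C ∘ ff h).
  { rewrite (fcod h), Huh. reflexivity. }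
  pose (top := pb_pair (PB _ (fX x)) et).
  assert (Ht1 : pb1 (PB _ (fX x)) ∘ top = w ∘ a) by apply pb_pair1.
  assert (Ht2 : pb2 (PB _ (fX x)) ∘ top = ff h) by apply pb_pair2.
  clearbody top.
  assert (HK : forall T : hom A (PB _ (fX x)),
     pb2 (PB _ (fX y)) ∘ (ut HB PB f ∘ T) = icomp C ∘ (ut_k HB PB f ∘ T)).
  { intro T. rewrite (cat_assoc HB), ut_2, <- (cat_assoc HB). reflexivity. }
  assert (Hcf : forall (k : @hom (Fam HB C) z' x),
     ff (comp (p := Fam HB C) f k) = icomp C ∘ pb_pair (C2 C) (fam_pair_ok HB f k)).
  { reflexivity. }
  exists (@Build_ArrHom B (Build_ArrOb a) (Build_ArrOb (pb1 (PB _ (fX x)))) top w Ht1).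
  split; [split|].
  - apply ArrHom_eq; simpl; [|symmetry; exact Hw].
    apply pb_uniq.
    + rewrite (cat_assoc HB), ut_sq, <- (cat_assoc HB), Ht1, sq, Hw, (cat_assoc HB).
      reflexivity.
    + rewrite HK.
      assert (H1 : ff f ∘ (pb1 (PB _ (fX x)) ∘ top) = ff f ∘ fu h).
      { rewrite Ht1, Huh. reflexivity. }
      rewrite (@utkT _ HB C PB _ _ f _ top _ _ (fam_pair_ok HB f h) H1 Ht2), <- Hcf, Hfh.
      reflexivity.
  - reflexivity.
  - intros h'' Hh'' Hb''.
    apply ArrHom_eq; simpl; [|exact Hb''].
    destruct h'' as [T bw sq']. simpl in *. subst bw.
    pose proof (f_equal (@atop _ _ _) Hh'') as Ht. simpl in Ht.
    assert (e2 : d0 C ∘ (ff f ∘ (w ∘ a)) = d1 C ∘ (pb2 (PB _ (fX x)) ∘ T)).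
    { rewrite (cat_assoc HB), (fdom f), <- sq', (cat_assoc HB), pb_comm,
        (cat_assoc HB). reflexivity. }
    assert (HkT : ut_k HB PB f ∘ T = pb_pair (C2 C) e2).
    { apply utkT; [rewrite sq'|]; reflexivity. }
    assert (kdom : d0 C ∘ (pb2 (PB _ (fX x)) ∘ T) = fX z').
    { simpl. unfold beta. rewrite <- Ht, HK, HkT. symmetry. rewrite (cat_assoc HB), (icomp_d0 C),
        <- (cat_assoc HB), pb_pair2. reflexivity. }
    assert (kcod : d1 C ∘ (pb2 (PB _ (fX x)) ∘ T) = fX x ∘ (w ∘ a)).
    { rewrite (cat_assoc HB), <- pb_comm, <- (cat_assoc HB), sq'. reflexivity. }
    set (k := @Build_FamHom B C z' x (w ∘ a) _ kdom kcod : @hom (Fam HB C) z' x).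
    assert (Hk : k = h).
    { apply Hun; [|reflexivity].
      apply FamHom_eq; simpl.
      - rewrite Hw, (cat_assoc HB). reflexivity.
      - unfold fam_cf. rewrite (proof_irrelevance _ (fam_pair_ok HB f k) e2).
        transitivity (icomp C ∘ pb_pair (C2 C) e2); [reflexivity|].
        rewrite <- HkT, <- HK, Ht. reflexivity. }
    apply pb_uniq.
    + rewrite sq', Ht1. reflexivity.
    + rewrite Ht2, <- Hk. reflexivity.
Qed.

Definition pbchoice (B : PreCat) (Hlim : has_finite_limits B) (C : InternalCat B)
  : PBT C :=
  fun J X => proj1_sig (constructive_indefinite_description (fun _ => True)
     (match proj2 Hlim _ _ _ X (d1 C) with inhabits p => ex_intro _ p Logic.I end)).

Theorem proposition21 (B : PreCat) (HB : is_cat B) (Hlim : has_finite_limits B)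
  (C : InternalCat B) :
  is_concrete_fibration HB (proj HB C).
Proof.
  split; [apply proj_fibration|].
  exists (UD HB (pbchoice Hlim C)).
  split; [apply UD_functor|]. split; [apply UD_faithful|].
  intros x y f. apply UD_cart.
Qed.
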